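(* Let $R$ be an associative ring with unity, $\sigma$ an endomorphism of $R$ and $\delta$ a $\sigma$-derivation of $R$. Let $a,b,c\in R$ and let $e\in\mathcal{S}_\ell(R)$ be such that $b\in r_R(cR)=eR$ and $Re$ is $(\sigma,\delta)$-stable. Then: (i) $c\,\sigma(ab)=c\,\delta(ab)=0$; (ii) $c\,f_k^j(ab)=0$ for all integers $0\le k\le j$.
   Context: A $\sigma$-derivation is an additive map $\delta\colon R\to R$ with $\delta(ab)=\sigma(a)\delta(b)+\delta(a)b$ for all $a,b\in R$. For $X\subseteq R$, $r_R(X)=\{a\in R\mid Xa=0\}$. An idempotent $e$ is left semicentral if $ere=re$ for all $r\in R$; $\mathcal{S}_\ell(R)$ denotes the set of left semicentral idempotents of $R$. A subset $X\subseteq R$ is $(\sigma,\delta)$-stable if $\sigma(X)\subseteq X$ and $\delta(X)\subseteq X$. For integers $0\le i\le j$, $f_i^j\in\mathrm{End}(R,+)$ denotes the sum of all possible words (compositions) in $\sigma,\delta$ built with $i$ letters $\sigma$ and $j-i$ letters $\delta$ (so $f_j^j=\sigma^j$, $f_0^j=\delta^j$); in the Ore extension $R[x;\sigma,\delta]$ one has $x^nr=\sum_{i=0}^n f_i^n(r)x^i$. *)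

(* Defs.v *)
From HB Require Import structures.
From mathcomp Require Import all_boot all_algebra.
Set Implicit Arguments. Unset Strict Implicit. Unset Printing Implicit Defensive.
Import GRing.Theory.
Local Open Scope ring_scope.

(* delta is a sigma-derivation (additivity is carried by the {additive} type) *)
Definition sigma_derivation (R : nzRingType) (sigma delta : R -> R) : Prop :=
  forall a b : R, delta (a * b) = sigma a * delta b + delta a * b.

Definition rann (R : nzRingType) (X : R -> Prop) : R -> Prop :=
  fun a => forall x, X x -> x * a = 0.

Definition rprinc (R : nzRingType) (c : R) : R -> Prop := fun x => exists r, x = c * r.
Definition lprinc (R : nzRingType) (e : R) : R -> Prop := fun x => exists r, x = r * e.

Definition left_semicentral (R : nzRingType) (e : R) : Prop :=
  e * e = e /\ forall r : R, e * r * e = r * e.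

Definition sd_stable (R : nzRingType) (sigma delta : R -> R) (X : R -> Prop) : Prop :=
  (forall x, X x -> X (sigma x)) /\ (forall x, X x -> X (delta x)).

(* the composition of the word w (true = sigma, false = delta), leftmost letter outermost *)
Definition apply_word (R : nzRingType) (sigma delta : R -> R) (w : seq bool) : R -> R :=
  foldr (fun (l : bool) g => (if l then sigma else delta) \o g) id w.

Definition f_word (R : nzRingType) (sigma delta : R -> R) (i j : nat) (x : R) : R :=
  \sum_(w : j.-tuple bool | count id w == i) apply_word sigma delta w x.

(* Main.v *)
Require Import Defs.
From HB Require Import structures.
From mathcomp Require Import all_boot all_algebra.
Import GRing.Theory.
Local Open Scope ring_scope.

Theorem lemma2p1 (R : nzRingType) (sigma : {rmorphism R -> R})
  (delta : {additive R -> R}) (a b c e : R) :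
  sigma_derivation sigma delta ->
  left_semicentral e ->
  rann (rprinc c) b ->
  (forall x, rann (rprinc c) x <-> rprinc e x) ->
  sd_stable sigma delta (lprinc e) ->
  (c * sigma (a * b) = 0 /\ c * delta (a * b) = 0) /\
  (forall k j : nat, (k <= j)%N -> c * f_word sigma delta k j (a * b) = 0).
Proof.
move=> Hd [ee Hsc] Hb Hiff [Ss Sd].
have eRe : lprinc e e by exists e.
have ideal : forall r s, rprinc e (r * e * s).
  by move=> r s; exists (r * e * s); rewrite !mulrA Hsc.
have [s' Hs'] := Ss _ eRe.
have [d' Hd'] := Sd _ eRe.
have stab : forall x, rprinc e x -> rprinc e (sigma x) /\ rprinc e (delta x).
  move=> x [y ->]; split.
    by rewrite rmorphM Hs'; apply: ideal.
  rewrite Hd Hs' Hd'.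
  have [u1 ->] := ideal s' (delta y).
  have [u2 ->] := ideal d' y.
  by exists (u1 + u2); rewrite mulrDr.
have ab : rprinc e (a * b).
  have [s ->] := (proj1 (Hiff b)) Hb.
  by rewrite mulrA; apply: ideal.
have kill : forall x, rprinc e x -> c * x = 0.
  move=> x /(Hiff x) H; rewrite -[c]mulr1; apply: H; exists 1; by [].
have word : forall w, rprinc e (apply_word sigma delta w (a * b)).
  elim=> [|l w IH] //=.
  by case: l; have [H1 H2] := stab _ IH.
split.
  have [H1 H2] := stab _ ab; split; exact: kill.
move=> k j _; rewrite /f_word mulr_sumr big1 // => w _.
exact: kill (word w).
Qed.
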